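(* Let $G$ be a group acting linearly and isometrically on a real Hilbert space $M$, let $t_0\in M\setminus\{0\}$ and let $\epsilon$ be a random variable in $M$ with $\mathbb{E}(\epsilon)=0$, $\mathbb{E}(\|\epsilon\|^2)=1$ and $\mathbb{P}\big(\sup_{g\in G}\langle g\cdot\epsilon,t_0\rangle>\langle\epsilon,t_0\rangle\big)>0$. Let $\nu=\mathbb{E}\big(\sup_{g\in G}\langle g\cdot\epsilon,t_0/\|t_0\|\rangle\big)$. Then $\nu\in(0,1]$. For $\sigma>0$ let $X_\sigma=t_0+\sigma\epsilon$, $a_\star(\sigma)=\mathbb{E}\big(\sup_{g}\langle g\cdot X_\sigma,t_0\rangle\big)/\|t_0\|^2$, and let $\delta_\star(\sigma)$ be the unique positive solution of $$\delta^2+2\delta\|t_0\|\Big(1+\sqrt{1+\sigma^2/\|t_0\|^2}\Big)-\|t_0\|^2(a_\star(\sigma)-1)^2=0.$$ Then $\delta_\star(\sigma)\sim\sigma\big(\sqrt{1+\nu^2}-1\big)$ as $\sigma\to+\infty$.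
   Context: $M$ is a real Hilbert space with inner product $\langle\cdot,\cdot\rangle$ and norm $\|\cdot\|$; the action is linear and isometric, i.e. each $x\mapsto g\cdot x$ is linear with $\|g\cdot x\|=\|x\|$. *)

(* Defs.v *)
From HB Require Import structures.
From mathcomp Require Import all_boot all_order all_algebra monoid.
From mathcomp Require Import all_classical all_reals all_analysis.
Set Implicit Arguments. Unset Strict Implicit. Unset Printing Implicit Defensive.
Import Order.TTheory GRing.Theory Num.Theory.
Import numFieldNormedType.Exports.
Local Open Scope classical_set_scope.
Local Open Scope ring_scope.

Definition inner_product (R : realType) (M : normedModType R)
  (ip : M -> M -> R) : Prop :=
  [/\ forall x y, ip x y = ip y x,
      forall (a : R) (x y z : M), ip (a *: x + y) z = a * ip x z + ip y z &
      forall x, ip x x = `|x| ^+ 2].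

Definition linear_isometric_action (R : realType) (M : normedModType R)
  (G : groupType) (act : G -> M -> M) : Prop :=
  [/\ forall x, act 1%g x = x,
      forall (g h : G) x, act (g * h)%g x = act g (act h x),
      forall g (a : R) (x y : M), act g (a *: x + y) = a *: act g x + act g y &
      forall g x, `|act g x| = `|x|].

Definition borel_measurable (R : realType) (M : normedModType R)
  (d : measure_display) (T : measurableType d) (f : T -> M) : Prop :=
  forall B : set M, <<s open >> B -> measurable (f @^-1` B).

Definition supG (R : realType) (M : normedModType R) (G : groupType)
  (act : G -> M -> M) (ip : M -> M -> R) (x t : M) : R :=
  sup (range (fun g : G => ip (act g x) t)).

(* Main.v *)
Require Import Defs.
From HB Require Import structures.
From mathcomp Require Import all_boot all_order all_algebra monoid.
From mathcomp Require Import all_classical all_reals all_analysis.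
From mathcomp Require Import ring lra.
Import Order.TTheory GRing.Theory Num.Theory.
Import numFieldNormedType.Exports.
Local Open Scope classical_set_scope.
Local Open Scope ring_scope.


Section Pointwise.
Context {R : realType} {M : normedModType R} {ip : M -> M -> R}
  {G : groupType} {act : G -> M -> M}.
Hypothesis hip : inner_product ip.
Hypothesis hact : linear_isometric_action act.

Lemma ipD x y z : ip (x + y) z = ip x z + ip y z.
Proof. by move: hip => [_ h _]; have := h 1 x y z; rewrite scale1r mul1r. Qed.

Lemma ip0 z : ip 0 z = 0.
Proof.
have := ipD 0 0 z; rewrite addr0 => /eqP; rewrite -subr_eq0.
by rewrite opprD addrA subrr sub0r oppr_eq0 => /eqP.
Qed.

Lemma ipZ a x z : ip (a *: x) z = a * ip x z.
Proof. by move: hip => [_ h _]; rewrite -[a *: x]addr0 h ip0 addr0. Qed.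

Lemma ipC x y : ip x y = ip y x.
Proof. by move: hip => [? ? ?]. Qed.

Lemma ipxx x : ip x x = `|x| ^+ 2.
Proof. by move: hip => [? ? ?]. Qed.

Lemma ipN x z : ip (- x) z = - ip x z.
Proof. by rewrite -scaleN1r ipZ mulN1r. Qed.

Lemma ip_le x y : ip x y <= `|x| * `|y|.
Proof.
have e : ip (x + y) (x + y) = `|x|^+2 + 2 * ip x y + `|y|^+2.
  rewrite ipD (ipC x) (ipC y) !ipD !ipxx (ipC y x); ring.
rewrite ipxx in e.
have h1 := ler_normD x y.
have h2 : 0 <= `|x + y| by [].
have h3 : 0 <= `|x| by [].
have h4 : 0 <= `|y| by [].
nra.
Qed.

Lemma ip_ge x y : - (`|x| * `|y|) <= ip x y.
Proof. by rewrite lerNl -ipN -(normrN x) ip_le. Qed.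

Lemma ip_abs x y : `|ip x y| <= `|x| * `|y|.
Proof. by rewrite ler_norml ip_ge ip_le. Qed.

Lemma actD g x y : act g (x + y) = act g x + act g y.
Proof. by move: hact => [_ _ h _]; have := h g 1 x y; rewrite !scale1r. Qed.

Lemma act0 g : act g 0 = 0.
Proof.
have := actD g 0 0; rewrite addr0 => /eqP; rewrite -subr_eq0.
by rewrite opprD addrA subrr sub0r oppr_eq0 => /eqP.
Qed.

Lemma actZ g a x : act g (a *: x) = a *: act g x.
Proof. by move: hact => [_ _ h _]; rewrite -[a *: x]addr0 h act0 addr0. Qed.

Lemma act_norm g x : `|act g x| = `|x|.
Proof. by move: hact => [? ? ? ?]. Qed.

Lemma act1 x : act 1%g x = x.
Proof. by move: hact => [? ? ? ?]. Qed.

Definition rg x t := range (fun g : G => ip (act g x) t).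

Lemma rg_ub x t : ubound (rg x t) (`|x| * `|t|).
Proof. by move=> _ [g _ <-]; rewrite -(act_norm g x) ip_le. Qed.

Lemma rg_n0 x t : rg x t !=set0.
Proof. by exists (ip (act 1%g x) t); exists 1%g. Qed.

Lemma S_ge g x t : ip (act g x) t <= supG act ip x t.
Proof. by apply: ub_le_sup; [exists (`|x| * `|t|); exact: rg_ub|exists g]. Qed.

Lemma S_self x t : ip x t <= supG act ip x t.
Proof. by rewrite -{1}(act1 x) S_ge. Qed.

Lemma S_le x t : supG act ip x t <= `|x| * `|t|.
Proof. exact: ge_sup (rg_n0 x t) (rg_ub x t). Qed.

Lemma S_abs x t : `|supG act ip x t| <= `|x| * `|t|.
Proof. by rewrite ler_norml S_le (le_trans (ip_ge x t) (S_self x t)). Qed.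

Lemma S_add x y t : supG act ip (x + y) t <= supG act ip x t + supG act ip y t.
Proof.
apply: ge_sup (rg_n0 _ _) _ => _ [g _ <-].
by rewrite actD ipD lerD // S_ge.
Qed.

Lemma S_scale_gen (f1 f2 : G -> R) c : 0 < c -> (forall g, f2 g = c * f1 g) ->
  has_ubound (range f1) -> sup (range f2) = c * sup (range f1).
Proof.
move=> c0 e [b hb].
have n1 : range f1 !=set0 by exists (f1 1%g); exists 1%g.
have n2 : range f2 !=set0 by exists (f2 1%g); exists 1%g.
apply/eqP; rewrite eq_le; apply/andP; split.
  apply: ge_sup n2 _ => _ [g _ <-]; rewrite e ler_pM2l //.
  by apply: ub_le_sup; [exists b|exists g].
rewrite -ler_pdivlMl //; apply: ge_sup n1 _ => _ [g _ <-].
rewrite ler_pdivlMl // -e; apply: ub_le_sup; last by exists g.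
by exists (c * b) => _ [h _ <-]; rewrite e ler_pM2l // hb //; exists h.
Qed.

Lemma S_scalel x t c : 0 < c -> supG act ip (c *: x) t = c * supG act ip x t.
Proof.
move=> c0; apply: S_scale_gen => // [g|]; first by rewrite actZ ipZ.
by exists (`|x| * `|t|); exact: rg_ub.
Qed.

Lemma S_scaler x t c : 0 < c -> supG act ip x (c *: t) = c * supG act ip x t.
Proof.
move=> c0; apply: S_scale_gen => // [g|]; first by rewrite ipC ipZ ipC.
by exists (`|x| * `|t|); exact: rg_ub.
Qed.


Lemma ip_polar x t : ip x t = 2^-1 * (`|x + t| ^+ 2 - `|x| ^+ 2 - `|t| ^+ 2).
Proof.
rewrite -!ipxx ipD (ipC x (x + t)) (ipC t (x + t)) !ipD (ipC t x).
by field.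
Qed.

Lemma Ssig_bound t0 e sg : 0 < sg ->
  `|supG act ip (t0 + sg *: e) t0 - sg * supG act ip e t0| <= `|t0| ^+ 2.
Proof.
move=> sg0; rewrite -S_scalel // ler_norml; apply/andP; split.
  have := S_add (t0 + sg *: e) (- t0) t0.
  rewrite addrC addKr.
  have := S_le (- t0) t0; rewrite normrN -expr2; lra.
have := S_add t0 (sg *: e) t0.
have := S_le t0 t0; rewrite -expr2; lra.
Qed.

End Pointwise.


Lemma meas_normD (R : realType) (M : normedModType R)
  (d : measure_display) (T : measurableType d) (f : T -> M) (c : M) :
  borel_measurable f -> measurable_fun setT (fun w => `|f w + c|).
Proof.
move=> hf; apply: (measurability _ (measurable_realfun.RGenOpens.measurableE R)).
move=> _ [_ [a [b ->] <-]]; rewrite setTI.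
have -> : (fun w => `|f w + c|) @^-1` `]a, b[ = f @^-1` ((fun x => `|x + c|) @^-1` `]a, b[) by [].
apply: hf; apply: sub_sigma_algebra.
have cf : continuous (fun x : M => `|x + c|).
  move=> x; apply: (@continuous_comp _ _ _ (fun x => x + c) (@Num.norm _ M)); last exact: norm_continuous.
  by apply: cvgD; [exact: cvg_id|exact: cvg_cst].
by move/continuousP: cf; apply; exact: interval_open.
Qed.


Section RealPart.
Variable R : realType.

Lemma sqrt_facts (y : R) : 0 <= y -> 0 <= Num.sqrt y /\ Num.sqrt y ^+ 2 = y.
Proof. by move=> y0; rewrite sqrtr_ge0 sqr_sqrtr. Qed.

Lemma root_pt (n s a : R) : 0 < n -> 0 <= s -> a != 1 ->
  exists! δ : R, 0 < δ /\
    δ ^+ 2 + 2 * δ * n * (1 + s) - n ^+ 2 * (a - 1) ^+ 2 = 0.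
Proof.
move=> n0 s0 a1.
set B := n * (1 + s); set C := n ^+ 2 * (a - 1) ^+ 2.
have B0 : 0 < B by rewrite /B mulr_gt0 // ltr_wpDr.
have C0 : 0 < C.
  rewrite /C; apply: mulr_gt0; first exact: exprn_gt0.
  by rewrite exprn_even_gt0 //= subr_eq0.
have [r0 r2] := @sqrt_facts _ (ltW (addr_gt0 (exprn_gt0 2 B0) C0)).
set r := Num.sqrt _ in r0 r2.
exists (r - B); split.
  split; first by nra.
  have -> : 2 * (r - B) * n * (1 + s) = 2 * (r - B) * B by rewrite /B; ring.
  rewrite -/C; nra.
move=> d [d0 hd].
have hd' : d ^+ 2 + 2 * d * B - C = 0.
  by rewrite -hd /B; ring.
have : (d - (r - B)) * (d + (r - B) + 2 * B) = 0 by nra.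
move/eqP; rewrite mulf_eq0 => /orP[/eqP|/eqP]; first by move/eqP; rewrite subr_eq0 => /eqP.
by nra.
Qed.


Lemma est_pt (n nu sg k s a d : R) : 0 < n -> 0 < nu -> nu <= 1 -> n <= sg ->
  0 < k -> k ^+ 2 + 2 * k = nu ^+ 2 -> 0 <= s -> s ^+ 2 = 1 + sg ^+ 2 / n ^+ 2 ->
  `|a - sg * nu / n| <= 1 -> 0 < d ->
  d ^+ 2 + 2 * d * n * (1 + s) - n ^+ 2 * (a - 1) ^+ 2 = 0 ->
  `|d - sg * k| <= 8 * n.
Proof.
move=> n0 nu0 nu1 nsg k0 hk s0 hs ha d0 hd.
have ns2 : (n * s) ^+ 2 = n ^+ 2 + sg ^+ 2.
  rewrite exprMn hs mulrDr mulr1; congr (_ + _).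
  by rewrite mulrC -mulrA mulVf ?mulr1 // expf_neq0 // gt_eqF.
have ns0 : 0 <= n * s by rewrite mulr_ge0 // ltW.
have nsl : sg <= n * s by nra.
have nsu : n * s <= sg + n by nra.
set z := n * (a - 1).
have ez : z - sg * nu = n * (a - sg * nu / n) - n.
  by rewrite /z; field; rewrite gt_eqF.
move: ha; rewrite ler_norml => /andP[ha1 ha2].
have hz1 : - (2 * n) <= z - sg * nu by rewrite ez; nra.
have hz2 : z - sg * nu <= 2 * n by rewrite ez; nra.
set B := n * (1 + s).
have hd' : d ^+ 2 + 2 * d * B = z ^+ 2.
  by apply/eqP; rewrite -subr_eq0; apply/eqP; rewrite -hd /B /z; ring.
set E := d - sg * k.
set W := d + sg * k + 2 * sg.
have W0 : 0 < W by rewrite /W; nra.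
have hEW : E * W = z ^+ 2 - sg ^+ 2 * nu ^+ 2 - 2 * (B - sg) * d.
  rewrite /E /W -hk; nra.
have hzz : `|z ^+ 2 - sg ^+ 2 * nu ^+ 2| <= 2 * n * (2 * sg + 2 * n).
  have -> : z ^+ 2 - sg ^+ 2 * nu ^+ 2 = (z - sg * nu) * (z + sg * nu) by ring.
  rewrite normrM; apply: ler_pM => //.
    by rewrite ler_norml; apply/andP; split; lra.
  by rewrite ler_norml; apply/andP; split; nra.
have hB : 0 <= B - sg <= 2 * n by rewrite /B; apply/andP; split; lra.
have : `|E| * W <= 8 * n * W.
  have -> : `|E| * W = `|E * W| by rewrite normrM (gtr0_norm W0).
  rewrite hEW; apply: le_trans (ler_normB _ _) _.
  have -> : `|2 * (B - sg) * d| = 2 * (B - sg) * d.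
    by rewrite ger0_norm //; nra.
  move: hB => /andP[hB1 hB2].
  have f1 : (B - sg) * d <= 2 * n * d by rewrite ler_pM2r.
  have f2 : n * n <= n * sg by rewrite ler_pM2l.
  have f3 : 0 <= n * (sg * k) by rewrite mulr_ge0 // ?mulr_ge0 //; lra.
  rewrite /W; nra.
by rewrite ler_pM2r.
Qed.


Lemma asym (n nu : R) (a : R -> R) : 0 < n -> 0 < nu -> nu <= 1 ->
  (forall sg, 0 < sg -> `|a sg - sg * nu / n| <= 1) ->
  (\forall sg \near +oo, exists! d : R, 0 < d /\
     d ^+ 2 + 2 * d * n * (1 + Num.sqrt (1 + sg ^+ 2 / n ^+ 2))
     - n ^+ 2 * (a sg - 1) ^+ 2 = 0) /\
  (forall ds : R -> R, (\forall sg \near +oo, 0 < ds sg /\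
     ds sg ^+ 2 + 2 * ds sg * n * (1 + Num.sqrt (1 + sg ^+ 2 / n ^+ 2))
     - n ^+ 2 * (a sg - 1) ^+ 2 = 0) ->
     (ds sg / (sg * (Num.sqrt (1 + nu ^+ 2) - 1))) @[sg --> +oo] --> (1 : R)).
Proof.
move=> n0 nu0 nu1 ha.
have [r0 r2] := @sqrt_facts (1 + nu ^+ 2) (addr_ge0 ler01 (sqr_ge0 nu)).
set r := Num.sqrt _ in r0 r2 *.
set k := r - 1.
have k0 : 0 < k by rewrite /k; nra.
have hk : k ^+ 2 + 2 * k = nu ^+ 2 by rewrite /k; nra.
have a1 : forall sg, 2 * n / nu < sg -> 1 < a sg.
  move=> sg hsg.
  have sg0 : 0 < sg by apply: lt_trans hsg; rewrite divr_gt0 // mulr_gt0.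
  have := ha sg sg0; rewrite ler_norml => /andP[h1 _].
  have : 2 < sg * nu / n.
    by rewrite ltr_pdivlMr // -ltr_pdivrMr // mulrC.
  lra.
split.
  near=> sg; apply: root_pt => //.
  by rewrite gt_eqF // a1 //; near: sg; apply: nbhs_pinfty_gt; exact: num_real.
move=> ds hds; apply/cvgrPdist_le => e e0.
near=> sg.
have sgn : n <= sg by near: sg; apply: nbhs_pinfty_ge; exact: num_real.
have sg0 : 0 < sg by lra.
have sge : 8 * n / (k * e) <= sg by near: sg; apply: nbhs_pinfty_ge; exact: num_real.
have [d0 hd] : 0 < ds sg /\
     ds sg ^+ 2 + 2 * ds sg * n * (1 + Num.sqrt (1 + sg ^+ 2 / n ^+ 2))
     - n ^+ 2 * (a sg - 1) ^+ 2 = 0 by near: sg; exact: hds.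
have hs := @sqrt_facts (1 + sg ^+ 2 / n ^+ 2) (addr_ge0 ler01 (divr_ge0 (sqr_ge0 _) (sqr_ge0 _))).
case: hs => s0 s2.
have := @est_pt n nu sg k _ (a sg) (ds sg) n0 nu0 nu1 sgn k0 hk s0 s2 (ha sg sg0) d0 hd.
have skp : 0 < sg * k by rewrite mulr_gt0.
have -> : 1 - ds sg / (sg * k) = (sg * k - ds sg) / (sg * k).
  by rewrite mulrBl divff // gt_eqF.
rewrite normrM normfV (gtr0_norm skp) distrC ler_pdivrMr // => h.
apply: le_trans h _.
move: sge; rewrite ler_pdivrMr ?mulr_gt0 //; nra.
Unshelve. all: end_near.
Qed.

End RealPart.


Section Integ.
Context {R : realType} {d : measure_display} {Omega : measurableType d}
  {P : probability Omega R}.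

Local Open Scope ring_scope.
Lemma int_affine (f : Omega -> R) (a b : R) : P.-integrable setT (EFin \o f) ->
  (\int[P]_w ((a * f w + b)%:E) = (a * fine (\int[P]_w (f w)%:E) + b)%:E)%E.
Proof.
move=> fi.
have fa : P.-integrable setT (EFin \o (fun w => a * f w)).
  apply: (eq_integrable measurableT _ _ _ (integrableZl measurableT a fi)).
  by move=> w _ /=; rewrite EFinM.
have cb : P.-integrable setT (EFin \o (cst b)) by exact: finite_measure_integrable_cst.
rewrite (eq_integral (fun w => (EFin \o (fun w => (a * f w)%R)) w + (EFin \o cst b) w)%E); last by move=> w _; rewrite /= EFinD.
rewrite integralD_EFin //=.
under eq_integral do rewrite EFinM.
rewrite integralZl // integral_cst //.
rewrite [X in (_ + b%:E * X)%E](_ : _ = 1%E); last exact: probability_setT.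
rewrite mule1.
have ff := integrable_fin_num measurableT fi.
by rewrite -(fineK ff) /= EFinD EFinM.
Qed.


Lemma int_affine_integrable (f : Omega -> R) (a b : R) :
  P.-integrable setT (EFin \o f) ->
  P.-integrable setT (EFin \o (fun w => a * f w + b)).
Proof.
move=> fi.
apply: (eq_integrable measurableT (fun w => (a%:E * (EFin \o f) w + (EFin \o cst b) w)%E)).
  by move=> w _ /=; rewrite EFinD EFinM.
apply: integrableD => //; first exact: integrableZl.
exact: finite_measure_integrable_cst.
Qed.

End Integ.


Theorem mainTheorem13 (R : realType) (M : completeNormedModType R)
  (ip : M -> M -> R) (G : groupType) (act : G -> M -> M)
  (d : measure_display) (Omega : measurableType d) (P : probability Omega R)
  (eps : Omega -> M) (t0 : M) :
  inner_product ip ->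
  linear_isometric_action act ->
  t0 != 0 ->
  borel_measurable eps ->
  (* E(eps) = 0 (weakly: every coordinate functional has mean zero) *)
  (forall t : M, (\int[P]_w (ip (eps w) t)%:E = 0)%E) ->
  (* E(||eps||^2) = 1 *)
  (\int[P]_w ((`|eps w| ^+ 2)%:E) = 1)%E ->
  (* the suprema below are random variables *)
  measurable_fun setT (fun w => supG act ip (eps w) t0) ->
  (forall sigma : R, 0 < sigma ->
     measurable_fun setT (fun w => supG act ip (t0 + sigma *: eps w) t0)) ->
  (0 < P [set w | (ip (eps w) t0 < supG act ip (eps w) t0)%R])%E ->
  let nuE := (\int[P]_w (supG act ip (eps w) (`|t0|^-1 *: t0))%:E)%E in
  let nu := fine nuE in
  let a_star := fun sigma : R =>
    fine (\int[P]_w (supG act ip (t0 + sigma *: eps w) t0)%:E)%E / `|t0| ^+ 2 in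
  let delta_eq := fun sigma delta : R =>
    delta ^+ 2 + 2 * delta * `|t0| * (1 + Num.sqrt (1 + sigma ^+ 2 / `|t0| ^+ 2))
    - `|t0| ^+ 2 * (a_star sigma - 1) ^+ 2 = 0 in
  [/\ (0 < nuE <= 1)%E,
      (\forall sigma \near +oo, exists! delta : R, 0 < delta /\ delta_eq sigma delta)
    & forall delta_star : R -> R,
        (\forall sigma \near +oo, 0 < delta_star sigma /\ delta_eq sigma (delta_star sigma)) ->
        (delta_star sigma / (sigma * (Num.sqrt (1 + nu ^+ 2) - 1)))
          @[sigma --> +oo] --> (1 : R)].
Proof.
move=> hip hact t00 heps hE hE2 mSe mSs hpos nuE nu a_star delta_eq.
have n0 : 0 < `|t0| by rewrite normr_gt0.
have mh2 : measurable_fun setT (fun w => `|eps w| ^+ 2).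
  apply: measurable_realfun.measurable_funX.
  have -> : (fun w => `|eps w|) = (fun w => `|eps w + 0|).
    by apply/funext => w; rewrite addr0.
  exact: meas_normD.
have mip : forall t, measurable_fun setT (fun w => ip (eps w) t).
  move=> t; rewrite (_ : (fun w => _) = (fun w => 2^-1 * (`|eps w + t| ^+ 2
     - `|eps w + 0| ^+ 2 - `|t| ^+ 2))); last first.
    by apply/funext => w; rewrite (ip_polar hip) addr0.
  apply: measurable_realfun.measurable_funM; first exact: measurable_cst.
  apply: measurable_realfun.measurable_funB; last exact: measurable_cst.
  by apply: measurable_realfun.measurable_funB; apply: measurable_realfun.measurable_funX; exact: meas_normD.
have ih2 : P.-integrable setT (EFin \o (fun w => `|eps w| ^+ 2)).
  apply/integrableP; split; first exact/measurable_realfun.measurable_EFinP.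
  rewrite (eq_integral (fun w => (`|eps w| ^+ 2)%:E)); first by rewrite hE2 ltry.
  by move=> w _ /=; rewrite ger0_norm.
have idom : forall f : Omega -> R, measurable_fun setT f -> forall K L : R,
    (forall w, `|f w| <= K * `|eps w| ^+ 2 + L) -> P.-integrable setT (EFin \o f).
  move=> f mf K L hb.
  have ig : P.-integrable setT (EFin \o (fun w => K * `|eps w| ^+ 2 + L)).
    apply: (eq_integrable measurableT (fun w => (K%:E * (`|eps w| ^+ 2)%:E + L%:E)%E)).
      by move=> w _ /=; rewrite EFinD EFinM.
    apply: integrableD => //; first exact: integrableZl.
    exact: finite_measure_integrable_cst.
  apply: le_integrable ig => //; first exact/measurable_realfun.measurable_EFinP.
  by move=> w _ /=; rewrite lee_fin (le_trans (hb w)) // ler_norm.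
have hsq : forall x : R, 0 <= x -> x <= x ^+ 2 + 1 by move=> x x0; nra.
pose Se := fun w => supG act ip (eps w) t0.
have iSe : P.-integrable setT (EFin \o Se).
  apply: (idom _ mSe `|t0| `|t0|) => w.
  rewrite /Se (le_trans (S_abs hip hact _ _)) //.
  have := hsq `|eps w| (normr_ge0 _); nra.
set j := fine (\int[P]_w (Se w)%:E)%E.
have nuEE : nuE = (`|t0|^-1 * j)%:E.
  rewrite /nuE -[_ * j]addr0 /j -(@int_affine _ _ _ P Se (`|t0|^-1) 0 iSe); apply: eq_integral => w _.
  by rewrite addr0 (S_scaler hip hact) // invr_gt0.
have nuj : nu = `|t0|^-1 * j by rewrite /nu nuEE.
have Sefin : (\int[P]_w (Se w)%:E)%E = j%:E.
  by rewrite /j fineK // integrable_fin_num.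
have jle : j <= `|t0|.
  pose g := fun w => `|t0| / 2 * `|eps w| ^+ 2 + `|t0| / 2.
  have g0 : forall w, 0 <= g w.
    by move=> w; rewrite /g addr_ge0 // ?mulr_ge0 // divr_ge0.
  have ig : P.-integrable setT (EFin \o g).
    apply: (idom _ _ (`|t0|/2) (`|t0|/2)) => [|w]; last by rewrite ger0_norm.
    apply: measurable_realfun.measurable_funD; last exact: measurable_cst.
    by apply: measurable_realfun.measurable_funM => //; exact: measurable_cst.
  have := @le_integral _ _ _ P setT measurableT _ _ iSe ig.
  have := @int_affine _ _ _ P (fun w => `|eps w| ^+ 2) (`|t0| / 2) (`|t0| / 2) ih2.
  rewrite /= hE2 /= mulr1 => e.
  rewrite Sefin /= e lee_fin.
  have -> : `|t0| / 2 + `|t0| / 2 = `|t0| by field.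
  apply => w _; rewrite lee_fin /Se /g (le_trans (S_le hip hact _ _)) //.
  have := sqr_ge0 (`|eps w| - 1); nra.
have jpos : 0 < j.
  pose D := fun w => Se w - ip (eps w) t0.
  have D0 : forall w, 0 <= D w by move=> w; rewrite subr_ge0 (S_self hip hact).
  have mD : measurable_fun setT D.
    exact: measurable_realfun.measurable_funB.
  have iip : P.-integrable setT (EFin \o (fun w => ip (eps w) t0)).
    apply: (idom _ (mip t0) `|t0| `|t0|) => w.
    rewrite (le_trans (ip_abs hip _ _)) //.
    have := hsq `|eps w| (normr_ge0 _); nra.
  have intD : (\int[P]_w (D w)%:E)%E = j%:E.
    rewrite (eq_integral (fun w => (Se w)%:E - (ip (eps w) t0)%:E)%E); last first.
      by move=> w _; rewrite EFinB.
    by rewrite integralB_EFin // hE Sefin sube0.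
  have j0 : 0 <= j.
    by rewrite -lee_fin -intD integral_ge0 // => w _; rewrite lee_fin.
  rewrite lt_neqAle j0 andbT; apply/negP => /eqP j00.
  have : (\int[P]_w `|(D w)%:E|)%E = 0.
    rewrite (eq_integral (fun w => (D w)%:E)); first by rewrite intD -j00.
    by move=> w _; rewrite /= ger0_norm.
  move/(ae_eq_integral_abs P measurableT ((measurable_realfun.measurable_EFinP _ _).2 mD)).
  move=> [N [mN PN0 sub]].
  have mA : measurable [set w | (ip (eps w) t0 < supG act ip (eps w) t0)%R].
    have := measurable_realfun.measurable_fun_ltr (mip t0) mSe measurableT (_ : measurable [set true]).
    by rewrite setTI; apply.
  have : P [set w | (ip (eps w) t0 < supG act ip (eps w) t0)%R] = 0%E.
    apply: (subset_measure0 mA mN _ PN0) => w hw; apply: sub => /= h.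
    have := h I; move/eqP; rewrite eqe /D subr_eq0 /Se => /eqP e.
    by move: hw => /=; rewrite e ltxx.
  by move=> PA0; move: hpos; rewrite PA0 ltxx.
have ha : forall sg, 0 < sg -> `|a_star sg - sg * nu / `|t0| | <= 1.
  move=> sg sg0.
  pose Ss := fun w => supG act ip (t0 + sg *: eps w) t0.
  have iSs : P.-integrable setT (EFin \o Ss).
    apply: (idom _ (mSs sg sg0) (sg * `|t0|) (`|t0| ^+ 2 + sg * `|t0|)) => w.
    rewrite /Ss (le_trans (S_abs hip hact _ _)) //.
    have h1 := ler_normD t0 (sg *: eps w).
    rewrite normrZ (gtr0_norm sg0) in h1.
    have f1 : `|t0 + sg *: eps w| * `|t0| <= (`|t0| + sg * `|eps w|) * `|t0|.
      by rewrite ler_pM2r.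
    have f2 : (sg * `|t0|) * `|eps w| <= (sg * `|t0|) * (`|eps w| ^+ 2 + 1).
      by rewrite ler_pM2l ?mulr_gt0 // hsq.
    rewrite expr2; nra.
  have Ifin := integrable_fin_num measurableT iSs.
  set I := fine (\int[P]_w (supG act ip (t0 + sg *: eps w) t0)%:E)%E.
  have IE : (\int[P]_w (Ss w)%:E)%E = I%:E by rewrite /I fineK.
  have up : I <= sg * j + `|t0| ^+ 2.
    rewrite -lee_fin -IE.
    have := @int_affine _ _ _ P Se sg (`|t0| ^+ 2) iSe.
    rewrite -/j => <-.
    apply: le_integral => //; first exact: int_affine_integrable.
    move=> w _; rewrite lee_fin.
    have := Ssig_bound hip hact t0 (eps w) sg sg0.
    rewrite /Ss /Se ler_norml => /andP[_ h]; lra.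
  have lo : sg * j - `|t0| ^+ 2 <= I.
    rewrite -lee_fin -IE.
    have := @int_affine _ _ _ P Se sg (- `|t0| ^+ 2) iSe.
    rewrite -/j => <-.
    apply: le_integral => //; first exact: int_affine_integrable.
    move=> w _; rewrite lee_fin.
    have := Ssig_bound hip hact t0 (eps w) sg sg0.
    rewrite /Ss /Se ler_norml => /andP[h _]; lra.
  rewrite /a_star -/I nuj.
  have t2 : 0 < `|t0| ^+ 2 by rewrite exprn_gt0.
  have -> : I / `|t0| ^+ 2 - sg * (`|t0|^-1 * j) / `|t0| = (I - sg * j) / `|t0| ^+ 2.
    by field; rewrite gt_eqF.
  rewrite normrM normfV (gtr0_norm t2) ler_pdivrMr // mul1r ler_norml.
  apply/andP; split; lra.
have nu0 : 0 < nu by rewrite nuj mulr_gt0 // invr_gt0.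
have nu1 : nu <= 1 by rewrite nuj mulrC ler_pdivrMr // mul1r.
have [h1 h2] := @asym R `|t0| nu a_star n0 nu0 nu1 ha.
split => //.
by rewrite nuEE -nuj lte_fin lee_fin nu0 nu1.
Qed.
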